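(* Let $\mathfrak{S}=(\mathcal{X},\mathsf{S},\gamma,(\Lambda_{a})_{a\in\mathcal{A}})$ be a spectral decomposition system for the Euclidean space $\mathfrak{H}$ and let $D$ be an $\mathsf{S}$-invariant subset of $\mathcal{X}$. Then: (i) $\operatorname{int}\gamma^{-1}(D)=\gamma^{-1}(\operatorname{int}D)$; (ii) $\overline{\gamma^{-1}(D)}=\gamma^{-1}(\overline{D})$ (closures); (iii) $\gamma^{-1}(D)$ is closed if and only if $D$ is closed; (iv) $\gamma^{-1}(D)$ is convex if and only if $D$ is convex.
   Context: A Euclidean space is a finite-dimensional real inner product space; inner products are written $\langle\cdot,\cdot\rangle$ and norms $\|\cdot\|$. Let $\mathfrak{H}$ and $\mathcal{X}$ be Euclidean spaces, let $\mathsf{S}$ be a group acting on $\mathcal{X}$ by linear isometries, let $\gamma\colon\mathfrak{H}\to\mathcal{X}$, and let $(\Lambda_a)_{a\in\mathcal{A}}$ be a family of linear operators from $\mathcal{X}$ to $\mathfrak{H}$. The orbit of $x$ is $\mathsf{S}\cdot x=\{s\cdot x: s\in\mathsf{S}\}$; a map $f$ on $\mathcal{X}$ is $\mathsf{S}$-invariant if $f(s\cdot x)=f(x)$ for all $s,x$; a subset $D$ of $\mathcal{X}$ is $\mathsf{S}$-invariant if $s\cdot x\in D$ whenever $x\in D$, $s\in\mathsf{S}$. The tuple is a spectral decomposition system for $\mathfrak{H}$ if: [A] every $\Lambda_a$ is an isometry; [B] there exists an $\mathsf{S}$-invariant $\tau\colon\mathcal{X}\to\mathcal{X}$ with $\tau(x)\in\mathsf{S}\cdot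 x$ for all $x$ and $\gamma\circ\Lambda_a=\tau$ for all $a$; [C] for every $X\in\mathfrak{H}$ there is $a$ with $X=\Lambda_a\gamma(X)$; [D] $\langle X,Y\rangle\leq\langle\gamma(X),\gamma(Y)\rangle$ for all $X,Y\in\mathfrak{H}$. *)

(* Defs.v *)
From HB Require Import structures.
From mathcomp Require Import all_boot all_order all_algebra.
From mathcomp Require Import all_classical all_reals all_analysis.
Set Implicit Arguments. Unset Strict Implicit. Unset Printing Implicit Defensive.
Import Order.TTheory GRing.Theory Num.Theory.
Import numFieldNormedType.Exports.
Local Open Scope classical_set_scope.
Local Open Scope ring_scope.

(* Euclidean spaces are modelled as 'rV[R]_n with the standard inner product
   (every n-dimensional Euclidean space is isometrically isomorphic to it).
   The topology is the canonical (product) topology of 'rV[R]_n, which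
   coincides with the Euclidean-norm topology. *)

Definition inner (R : realType) (n : nat) (x y : 'rV[R]_n) : R :=
  (x *m y^T) 0 0.

Definition enorm (R : realType) (n : nat) (x : 'rV[R]_n) : R :=
  Num.sqrt (inner x x).

Definition lin_isometry (R : realType) (m n : nat)
  (L : {linear 'rV[R]_m -> 'rV[R]_n}) : Prop :=
  forall x, enorm (L x) = enorm x.

Record isometric_group_action (R : realType) (m : nat) := IsoGroupAction {
  grp : Type;
  gmul : grp -> grp -> grp;
  gone : grp;
  ginv : grp -> grp;
  act : grp -> {linear 'rV[R]_m -> 'rV[R]_m};
  gmulA : forall a b c, gmul a (gmul b c) = gmul (gmul a b) c;
  gmul1 : forall a, gmul gone a = a;
  gmulV : forall a, gmul (ginv a) a = gone;
  act1 : forall x, act gone x = x;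
  actM : forall a b x, act (gmul a b) x = act a (act b x);
  act_iso : forall a, lin_isometry (act a)
}.

Definition orbit (R : realType) (m : nat) (G : isometric_group_action R m)
  (x : 'rV[R]_m) : set 'rV[R]_m :=
  [set y | exists s : grp G, y = act s x].

Definition invariant_fun (R : realType) (m : nat) (G : isometric_group_action R m)
  (T : Type) (f : 'rV[R]_m -> T) : Prop :=
  forall (s : grp G) x, f (act s x) = f x.

Definition invariant_set (R : realType) (m : nat) (G : isometric_group_action R m)
  (D : set 'rV[R]_m) : Prop :=
  forall (s : grp G) x, D x -> D (act s x).

(* Spectral decomposition system (X, S, gamma, (Lambda_a)_{a in A}) for H,
   with H = 'rV[R]_n, X = 'rV[R]_m. *)
Definition spectral_decomposition_system (R : realType) (n m : nat)
  (G : isometric_group_action R m) (gamma : 'rV[R]_n -> 'rV[R]_m)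
  (A : Type) (Lam : A -> {linear 'rV[R]_m -> 'rV[R]_n}) : Prop :=
  (* [A] *) (forall a, lin_isometry (Lam a)) /\
  (* [B] *) (exists tau : 'rV[R]_m -> 'rV[R]_m,
               invariant_fun G tau /\ (forall x, orbit G x (tau x)) /\
               (forall a x, gamma (Lam a x) = tau x)) /\
  (* [C] *) (forall X, exists a, X = Lam a (gamma X)) /\
  (* [D] *) (forall X Y, inner X Y <= inner (gamma X) (gamma Y)).

Definition convex_rV (R : realType) (n : nat) (C : set 'rV[R]_n) : Prop :=
  forall x y (t : R), C x -> C y -> 0 <= t -> t <= 1 ->
    C (t *: x + (1 - t) *: y).

(* Main.v *)
Require Import Defs.
From HB Require Import structures.
From mathcomp Require Import all_boot all_order all_algebra.
From mathcomp Require Import all_classical all_reals all_analysis.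
From mathcomp Require Import ring lra.
Import Order.TTheory GRing.Theory Num.Theory.
Import numFieldNormedType.Exports.
Local Open Scope classical_set_scope.
Local Open Scope ring_scope.
Set Implicit Arguments. Unset Strict Implicit. Unset Printing Implicit Defensive.

Section Inner.
Variables (R : realType) (k : nat).
Implicit Types x y z : 'rV[R]_k.

Lemma innerE x y : inner x y = \sum_i x 0 i * y 0 i.
Proof. by rewrite /inner !mxE; apply: eq_bigr => i _; rewrite mxE. Qed.

Lemma innerC x y : inner x y = inner y x.
Proof. by rewrite !innerE; apply: eq_bigr => i _; rewrite mulrC. Qed.

Lemma innerDl x y z : inner (x + y) z = inner x z + inner y z.
Proof. by rewrite !innerE -big_split; apply: eq_bigr => i _; rewrite mxE mulrDl. Qed.

Lemma innerZl a x y : inner (a *: x) y = a * inner x y.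
Proof. by rewrite !innerE mulr_sumr; apply: eq_bigr => i _; rewrite mxE mulrA. Qed.

Lemma innerNl x y : inner (- x) y = - inner x y.
Proof. by rewrite -scaleN1r innerZl mulN1r. Qed.

Lemma innerBl x y z : inner (x - y) z = inner x z - inner y z.
Proof. by rewrite innerDl innerNl. Qed.

Lemma innerDr x y z : inner z (x + y) = inner z x + inner z y.
Proof. by rewrite !(innerC z) innerDl. Qed.

Lemma innerZr a x y : inner y (a *: x) = a * inner y x.
Proof. by rewrite !(innerC y) innerZl. Qed.

Lemma innerBr x y z : inner z (x - y) = inner z x - inner z y.
Proof. by rewrite !(innerC z) innerBl. Qed.

Lemma inner0l x : inner 0 x = 0.
Proof. by rewrite innerE big1 // => i _; rewrite mxE mul0r. Qed.

Lemma sq_ge0 x : 0 <= inner x x.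
Proof. by rewrite innerE; apply: sumr_ge0 => i _; rewrite -expr2 sqr_ge0. Qed.

Lemma sq_eq0 x : inner x x = 0 -> x = 0.
Proof.
rewrite innerE => /psumr_eq0P H; apply/rowP => i; rewrite mxE.
have /eqP := H (fun j _ => ltac:(rewrite -expr2; exact: sqr_ge0)) i isT.
by rewrite -expr2 sqrf_eq0 => /eqP.
Qed.

Lemma sqB x y : inner (x - y) (x - y) = inner x x + inner y y - 2 * inner x y.
Proof. rewrite innerBl !innerBr (innerC y x); ring. Qed.

Lemma entry_le_sq x i : x 0 i ^+ 2 <= inner x x.
Proof.
rewrite innerE (bigD1 i) //= -expr2 lerDl; apply: sumr_ge0 => j _.
by rewrite -expr2 sqr_ge0.
Qed.

Lemma entry_le_norm x i : `|x 0 i| <= `|x|.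
Proof.
rewrite [leRHS](_ : _ = mx_norm x) // mx_normrE; apply/bigmax_geP; right => /=.
by exists (0, i).
Qed.

Lemma norm_le_sqrt x : `|x| <= Num.sqrt (inner x x).
Proof.
rewrite [leLHS](_ : _ = mx_norm x) // mx_normrE; apply/bigmax_leP; split; first exact: sqrtr_ge0.
move=> [i j] _ /=; rewrite (ord1 i).
rewrite -(sqrtr_sqr (x 0 j)) ler_sqrt; last exact: sq_ge0.
exact: entry_le_sq.
Qed.

Lemma sq_le_norm x : inner x x <= k%:R * `|x| ^+ 2.
Proof.
rewrite innerE.
apply: (@le_trans _ _ (\sum_(i < k) `|x| ^+ 2)).
  apply: ler_sum => i _.
  rewrite -expr2 -real_normK ?num_real //; apply: lerXn2r; rewrite ?nnegrE //.
  exact: entry_le_norm.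
by rewrite sumr_const card_ord mulr_natl.
Qed.

End Inner.

Section Topo.
Variables (R : realType).

Lemma norm2_le_sq k (x : 'rV[R]_k) : `|x| ^+ 2 <= inner x x.
Proof.
have h := norm_le_sqrt x.
by rewrite -(sqr_sqrtr (sq_ge0 x)); apply: lerXn2r; rewrite ?nnegrE ?sqrtr_ge0.
Qed.

Lemma nonexp_cont a b (f : 'rV[R]_a -> 'rV[R]_b) :
  (forall x y, inner (f x - f y) (f x - f y) <= inner (x - y) (x - y)) ->
  continuous f.
Proof.
move=> H x; apply/(@cvgrPdist_lt _ _ _ (nbhs x) (@nbhs_filter _ x)) => e e0.
have ha : (0:R) <= a%:R := ler0n _ _.
have d0 : 0 < e / (a%:R + 1) by apply: divr_gt0 => //; lra.
have hb : nbhs x [set t | `|x - t| < e / (a%:R + 1)].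
  by rewrite -[X in nbhs _ X]/(ball_ (@Num.norm _ _) x _) ball_normE; apply: nbhsx_ballx.
apply: (filterS _ hb) => t /= ht.
have h1 := norm2_le_sq (f x - f t).
have h2 := H x t.
have h3 := sq_le_norm (x - t).
have hn : 0 <= `|x - t| := normr_ge0 _.
have hn' : 0 <= `|f x - f t| := normr_ge0 _.
have h4 : (a%:R + 1) * `|x - t| < e.
  by rewrite mulrC -ltr_pdivlMr //; lra.
have h5 : `|f x - f t| ^+ 2 < e ^+ 2.
  apply: (le_lt_trans h1); apply: (le_lt_trans h2); apply: (le_lt_trans h3).
  rewrite !expr2; move: h4 hn; set N := `|x - t|; move=> h4 hn.
  have hp : 0 <= (a%:R + 1) * N by nra.
  have h6 : ((a%:R + 1) * N) * ((a%:R + 1) * N) < e * e by nra.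
  nra.
by rewrite -(ltr_pXn2r (n:=2)) // nnegrE; lra.
Qed.

Lemma closure_approx k (A : set 'rV[R]_k) y : closure A y ->
  forall e, 0 < e -> exists z, A z /\ inner (z - y) (z - y) < e.
Proof.
move=> cl e e0.
have hk : (0:R) <= k%:R := ler0n _ _.
pose d := Num.min 1 (e / (k%:R + 1)).
have d0 : 0 < d by rewrite lt_min ltr01 /=; apply: divr_gt0 => //; lra.
have d1 : d <= 1 by rewrite ge_min lexx.
have d2 : d <= e / (k%:R + 1) by rewrite ge_min lexx orbT.
have d3 : (k%:R + 1) * d <= e by rewrite mulrC -ler_pdivlMr //; lra.
have [z [Az bz]] := cl _ (nbhsx_ballx y d d0).
exists z; split => //.
rewrite -ball_normE /= in bz.
have h3 := sq_le_norm (z - y).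
rewrite -opprB normrN in bz.
have hn : 0 <= `|z - y| := normr_ge0 _.
apply: (le_lt_trans h3); rewrite expr2; move: bz hn; set N := `|z - y| => bz hn.
have h5 : N * N <= d * d by nra.
have h6 : d * d <= d by nra.
nra.
Qed.

End Topo.

Section Cont.
Variables (R : realType) (m : nat).

Definition gmap0 (z : R * ('rV[R]_m * 'rV[R]_m)) : 'rV[R]_m := z.1 *: z.2.1 + (1 - z.1) *: z.2.2.
Lemma gmap0_cont : continuous gmap0.
Proof.
move=> z.
apply: (@continuousD _ _ _ (fun z : R * ('rV[R]_m * 'rV[R]_m) => z.1 *: z.2.1) (fun z => (1 - z.1) *: z.2.2)).
  apply: (@continuousZ _ _ _ (fun z : R * ('rV[R]_m * 'rV[R]_m) => z.1) (fun z => z.2.1)).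
- exact: cvg_fst.
- apply: cvg_comp; [exact: cvg_snd | exact: cvg_fst].
apply: (@continuousZ _ _ _ (fun z : R * ('rV[R]_m * 'rV[R]_m) => 1 - z.1) (fun z => z.2.2)).
- apply: continuousB; [exact: cvg_cst| exact: cvg_fst].
- apply: cvg_comp; [exact: cvg_snd | exact: cvg_snd].
Qed.
Lemma cont_sum (T : topologicalType) (I : Type) (s : seq I) (F : I -> T -> R) :
  (forall i, continuous (F i)) -> continuous (fun c => \sum_(i <- s) F i c).
Proof.
move=> H; elim: s => [|a s IH].
  rewrite (_ : (fun c => _) = fun _ => 0); first exact: cst_continuous.
  by apply: funext => c; rewrite big_nil.
rewrite (_ : (fun c => _) = fun c => F a c + \sum_(i <- s) F i c); last first.
  by apply: funext => c; rewrite big_cons.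
by move=> c; apply: cvgD; [exact: H | exact: IH].
Qed.

Lemma f_cont (x : 'rV[R]_m) : continuous (fun c : 'rV[R]_m => inner (x - c) (x - c)).
Proof.
rewrite (_ : (fun c => _) = fun c => \sum_i (x - c) 0 i * (x - c) 0 i); last first.
  by apply: funext => c; rewrite innerE.
apply: cont_sum => i.
rewrite (_ : (fun c => _) = fun c : 'rV[R]_m => (x 0 i - c 0 i) * (x 0 i - c 0 i)); last first.
  by apply: funext => c; rewrite !mxE.
move=> c.
have h : (fun c : 'rV[R]_m => x 0 i - c 0 i) @ c --> x 0 i - c 0 i.
  apply: (@cvgB _ _ _ (nbhs c) (@nbhs_filter _ c) (fun c : 'rV[R]_m => x 0 i) (fun c : 'rV[R]_m => c 0 i)); first exact: cvg_cst.
  exact: (@coord_continuous R 1 m 0 i).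
exact: (@cvgM _ _ (nbhs c) (@nbhs_filter _ c) _ _ _ _ h h).
Qed.
End Cont.


Section Conv.
Variables (R : realType) (m : nat) (K : set 'rV[R]_m).

Fixpoint cv (j : nat) : set 'rV[R]_m :=
  if j is j'.+1 then (@gmap0 R m) @` (`[0, 1] `*` (K `*` cv j')) else K.

Lemma cvS_intro j t a b : 0 <= t -> t <= 1 -> K a -> cv j b ->
  cv j.+1 (t *: a + (1 - t) *: b).
Proof.
move=> t0 t1 Ka cb; exists (t, (a, b)) => //; split => //=.
by rewrite in_itv /= t0 t1.
Qed.

Lemma cvS_elim j x : cv j.+1 x -> exists t a b,
  [/\ 0 <= t, t <= 1, K a, cv j b & x = t *: a + (1 - t) *: b].
Proof.
case=> [[t [a b]]] [/= tI [Ka cb]] <-; move: tI; rewrite /= in_itv /= => /andP[t0 t1].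
by exists t, a, b.
Qed.

Lemma cv_n0 : K !=set0 -> forall j, cv j !=set0.
Proof.
move=> [a Ka]; elim=> [|j [b cb]]; first by exists a.
by exists (1 *: a + (1 - 1) *: b); apply: cvS_intro => //; rewrite ler01.
Qed.

Lemma cv_compact : compact K -> forall j, compact (cv j).
Proof.
move=> cK; elim=> [//|j IH] /=.
apply: continuous_compact; first exact: continuous_subspaceT (@gmap0_cont R m).
apply: compact_setX; first exact: segment_compact.
exact: compact_setX.
Qed.

Lemma cv_sub (D : set _) : convex_rV D -> K `<=` D -> forall j, cv j `<=` D.
Proof.
move=> cD KD; elim=> [//|j IH] x /cvS_elim [t [a [b [t0 t1 Ka cb ->]]]].
by apply: cD => //; [exact: KD | exact: IH].
Qed.

Definition comb (j : nat) (x : 'rV[R]_m) :=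
  exists (l : 'I_j -> R) (v : 'I_j -> 'rV[R]_m),
  [/\ forall i, 0 <= l i, \sum_i l i = 1, forall i, K (v i) & x = \sum_i l i *: v i].

Lemma cv_comb j : cv j `<=` comb j.+1.
Proof.
elim: j => [|j IH] x.
  move=> Kx; exists (fun _ => 1), (fun _ => x); split => //.
  by rewrite big_ord1.
  by rewrite big_ord1 scale1r.
move=> /cvS_elim [t [a [b [t0 t1 Ka /IH [l [v [l0 l1 Kv ->]]] ->]]]].
pose l' (i : 'I_j.+2) := if (i : nat) == 0%N then t else (1 - t) * l (inord i.-1).
pose v' (i : 'I_j.+2) := if (i : nat) == 0%N then a else v (inord i.-1).
have hl : forall i : 'I_j.+1, l' (lift ord0 i) = (1 - t) * l i.
  by move=> i; rewrite /l' lift0 /= inord_val.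
have hv : forall i : 'I_j.+1, v' (lift ord0 i) = v i.
  by move=> i; rewrite /v' lift0 /= inord_val.
exists l', v'; split.
- move=> i; rewrite /l'; case: ifP => // _; apply: mulr_ge0 => //.
  by rewrite subr_ge0.
- rewrite big_ord_recl.
  under eq_bigr do rewrite hl.
  by rewrite -mulr_sumr l1 mulr1 /l' /= addrC subrK.
- by move=> i; rewrite /v'; case: ifP.
- rewrite [RHS]big_ord_recl.
  rewrite [in RHS](eq_bigr (fun i => ((1 - t) * l i) *: v i)); last by move=> i _; rewrite hl hv.
  rewrite /l' /v' /= scaler_sumr; congr (_ + _); apply: eq_bigr => i _; by rewrite scalerA.
Qed.

Lemma comb_cv : K !=set0 -> forall j, comb j.+1 `<=` cv j.
Proof.
move=> Kn0; elim=> [|j IH] x [l [v [l0 l1 Kv ->]]].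
  by move: l1; rewrite !big_ord1 => ->; rewrite scale1r; exact: Kv.
move: l1; rewrite big_ord_recl => l1; rewrite big_ord_recl.
set s := \sum_(i < j.+1) l (lift ord0 i) in l1.
have s0 : 0 <= s by apply: sumr_ge0 => i _.
move: s0; rewrite le_eqVlt => /orP[/eqP s00|sp].
  have hz : forall i, l (lift ord0 i) = 0.
    by move=> i; have := psumr_eq0P (fun i _ => l0 (lift ord0 i)) (esym s00); apply.
  have [b cb] := cv_n0 Kn0 j.
  rewrite big1 ?addr0; last by move=> i _; rewrite hz scale0r.
  have -> : l ord0 = 1 by rewrite -l1 -s00 addr0.
  rewrite -[1 *: v ord0]addr0 -(scale0r b) -(subrr (1:R)).
  by apply: cvS_intro => //; rewrite ler01.
pose y := \sum_(i < j.+1) (l (lift ord0 i) / s) *: v (lift ord0 i).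
have cy : cv j y.
  apply: IH; exists (fun i => l (lift ord0 i) / s), (fun i => v (lift ord0 i)); split => //.
  - by move=> i; apply: divr_ge0 => //; apply: ltW.
  - by rewrite -mulr_suml mulfV // gt_eqF.
have -> : \sum_(i < j.+1) l (lift ord0 i) *: v (lift ord0 i) = (1 - l ord0) *: y.
  have hs : 1 - l ord0 = s by lra.
  rewrite /y hs scaler_sumr; apply: eq_bigr => i _; rewrite scalerA.
  by rewrite mulrC divfK // gt_eqF.
have hl1 : l ord0 <= 1 by rewrite -l1 lerDl ltW.
by apply: cvS_intro.
Qed.

End Conv.

Section Carath.
Variables (R : realType) (m : nat) (K : set 'rV[R]_m).

Lemma carath j : (m.+1 <= j)%N -> comb K j.+1 `<=` comb K j.
Proof.
move=> hj x [l [v [l0 l1 Kv ->]]].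
pose M : 'M[R]_(j.+1, m + 1) := row_mx (\matrix_i v i) (const_mx 1).
have hr : (0 < \rank (kermx M))%N.
  rewrite mxrank_ker subn_gt0; apply: leq_ltn_trans (rank_leq_col M) _.
  by rewrite addn1 ltnS.
have [r hr0] : exists r, row r (kermx M) != 0.
  case: (pselect (exists r, row r (kermx M) != 0)) => // /forallNP H.
  have : kermx M = 0.
    apply/row_matrixP => r; have := H r; rewrite row0.
    by move/negP/negbNE/eqP.
  by move=> h; move: hr; rewrite h mxrank0.
set w := row r (kermx M).
have hw : w *m M = 0 by rewrite /w -row_mul mulmx_ker row0.
move: hw; rewrite mul_mx_row -row_mx0 => /eq_row_mx [hw1 hw2].
pose mu i := w 0 i.
have hmuv : \sum_i mu i *: v i = 0.
  rewrite -[in RHS]hw1 mulmx_sum_row; apply: eq_bigr => i _; by rewrite rowK.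
have hmu : \sum_i mu i = 0.
  move: hw2 => /(congr1 (fun (A : 'M[R]_(1, 1)) => A 0 0)); rewrite !mxE => h; rewrite -[in RHS]h.
  by apply: eq_bigr => i _; rewrite /mu [const_mx _ _ _]mxE mulr1.
have [i0 hi0] : exists i0, 0 < mu i0.
  case: (pselect (exists i0, 0 < mu i0)) => // /forallNP H.
  have hneg : forall i, 0 <= - mu i.
    by move=> i; rewrite oppr_ge0 leNgt; apply/negP => /H.
  have hz := psumr_eq0P (fun i (_ : true) => hneg i).
  rewrite sumrN hmu oppr0 in hz.
  have := hr0; rewrite -/w; case/negP; apply/eqP/rowP => i.
  by have := hz erefl i isT; rewrite /mu => h; rewrite [RHS]mxE -[LHS]opprK h oppr0.
have [j0 Pj0 minj] := arg_minP (fun i => l i / mu i) (hi0 : (fun i => 0 < mu i) i0).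
pose th := l j0 / mu j0.
have th0 : 0 <= th by apply: divr_ge0 => //; apply: ltW.
pose l' i := l i - th * mu i.
have l'0 : forall i, 0 <= l' i.
  move=> i; rewrite /l' subr_ge0; case: (ltP 0 (mu i)) => hmui.
  - by have := minj i hmui; rewrite -/th ler_pdivlMr.
  - by apply: le_trans (l0 i); apply: mulr_ge0_le0.
have l'j0 : l' j0 = 0 by rewrite /l' /th divfK ?subrr // gt_eqF.
have l'1 : \sum_i l' i = 1 by rewrite /l' sumrB -mulr_sumr hmu mulr0 subr0.
have l'x : \sum_i l' i *: v i = \sum_i l i *: v i.
  rewrite /l'; under eq_bigr do rewrite scalerBl -scalerA.
  by rewrite sumrB -scaler_sumr hmuv scaler0 subr0.
exists (fun i => l' (lift j0 i)), (fun i => v (lift j0 i)); split.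
- by move=> i; exact: l'0.
- by rewrite -l'1 (bigD1_ord j0) //= l'j0 add0r.
- by move=> i; exact: Kv.
- by rewrite -l'x (bigD1_ord j0) //= l'j0 scale0r add0r.
Qed.


Lemma comb_shrink j : (m.+1 <= j)%N -> comb K j `<=` comb K m.+1.
Proof.
elim: j => [//|j IH] hj.
move: hj; rewrite leq_eqVlt => /orP[/eqP -> //|hj].
rewrite ltnS in hj.
by move=> x /(carath hj) /(IH hj).
Qed.

Lemma cv_step a c t : K a -> cv K m c -> 0 <= t -> t <= 1 ->
  cv K m (t *: a + (1 - t) *: c).
Proof.
move=> Ka cc t0 t1.
have Kn0 : K !=set0 by exists a.
apply: (comb_cv Kn0); apply: (@comb_shrink m.+2) => //.
by apply: cv_comb; apply: cvS_intro.
Qed.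

Lemma conv_sep (D : set 'rV[R]_m) : compact K -> K !=set0 -> convex_rV D ->
  K `<=` D -> forall x, (forall u, exists2 c, K c & inner x u <= inner c u) -> D x.
Proof.
move=> cK Kn0 cD KD x Hx.
case: (pselect (D x)) => // nDx; exfalso.
have [c0 c0C minc] := EVT_min_rV (cv_n0 Kn0 m) (cv_compact (j:=m) cK)
  (continuous_subspaceT (A:=cv K m) (@f_cont R m x)).
move: c0C; rewrite inE => c0C.
set u := x - c0.
have hu : forall c, K c -> inner c u <= inner c0 u.
  move=> c Kc; rewrite -subr_le0 -innerBl.
  set d := c - c0; set dl := inner d u.
  rewrite leNgt; apply/negP => dpos.
  set q := inner d d; have q0 : 0 <= q := sq_ge0 d.
  pose t := dl / (q + dl).
  have qd : 0 < q + dl by lra.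
  have ht : t * (q + dl) = dl by rewrite /t divfK // gt_eqF.
  have t0 : 0 < t by apply: divr_gt0.
  have t1 : t <= 1 by rewrite /t ler_pdivrMr // mul1r; lra.
  have := minc (t *: c + (1 - t) *: c0) (mem_set (cv_step Kc c0C (ltW t0) t1)).
  have -> : x - (t *: c + (1 - t) *: c0) = u - t *: d.
    by apply/rowP => i; rewrite /u /d !mxE; ring.
  change (inner u u <= inner (u - t *: d) (u - t *: d) -> False).
  rewrite (sqB u) innerZl !innerZr (innerC u d) -/dl -/q => h.
  have h2 : 2 * (t * dl) <= t * (t * q) by lra.
  nra.
have [c Kc hc] := Hx u.
have h1 := hu c Kc.
have h2 : inner u u <= 0 by rewrite {1}/u innerBl; lra.
have h3 : inner u u = 0 by apply/eqP; rewrite eq_le h2 sq_ge0.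
have := sq_eq0 h3; rewrite /u => /eqP; rewrite subr_eq0 => /eqP exc0.
by apply: nDx; rewrite exc0; apply: (cv_sub cD KD c0C).
Qed.

End Carath.

Lemma sqD (R : realType) k (x y : 'rV[R]_k) :
  inner (x + y) (x + y) = inner x x + inner y y + 2 * inner x y.
Proof. rewrite innerDl !innerDr (innerC y x); ring. Qed.

Lemma iso_sq (R : realType) a b (L : {linear 'rV[R]_a -> 'rV[R]_b}) x :
  lin_isometry L -> inner (L x) (L x) = inner x x.
Proof.
move=> H; rewrite -(sqr_sqrtr (sq_ge0 (L x))) -(sqr_sqrtr (sq_ge0 x)).
by have := H x; rewrite /enorm => ->.
Qed.

Lemma iso_inner (R : realType) a b (L : {linear 'rV[R]_a -> 'rV[R]_b}) x y :
  lin_isometry L -> inner (L x) (L y) = inner x y.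
Proof.
move=> H; have := iso_sq (x + y) H; rewrite linearD !sqD !iso_sq // => h.
lra.
Qed.

Lemma act_inv (R : realType) m (G : isometric_group_action R m) (s : grp G) (x : 'rV[R]_m) :
  act (ginv s) (act s x) = x.
Proof. by rewrite -(@actM _ _ G) gmulV act1. Qed.

Lemma act_inner (R : realType) m (G : isometric_group_action R m) (s : grp G) (x y : 'rV[R]_m) :
  inner (act s x) (act s y) = inner x y.
Proof. exact: iso_inner (act_iso s). Qed.

Lemma inv_iff (R : realType) m (G : isometric_group_action R m) (E : set 'rV[R]_m) :
  invariant_set G E -> forall (s : grp G) x, E (act s x) <-> E x.
Proof.
move=> HE s x; split; last exact: HE.
by move=> /(HE (ginv s)); rewrite act_inv.
Qed.

Lemma invC (R : realType) m (G : isometric_group_action R m) (E : set 'rV[R]_m) :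
  invariant_set G E -> invariant_set G (~` E).
Proof. by move=> HE s x nEx /(inv_iff HE). Qed.

Lemma le0_of_lt (R : realType) (a : R) : (forall e, 0 < e -> a < e) -> a <= 0.
Proof. by move=> H; rewrite leNgt; apply/negP => h; have := H a h; rewrite ltxx. Qed.

Lemma orbit_closed (R : realType) n m (G : isometric_group_action R m)
  (gamma : 'rV[R]_n -> 'rV[R]_m) (A : Type) (Lam : A -> {linear 'rV[R]_m -> 'rV[R]_n})
  (tau : 'rV[R]_m -> 'rV[R]_m) (a0 : A) :
  (forall a, lin_isometry (Lam a)) -> invariant_fun G tau ->
  (forall x, Defs.orbit G x (tau x)) -> (forall a x, gamma (Lam a x) = tau x) ->
  (forall X Y, inner X Y <= inner (gamma X) (gamma Y)) ->
  forall p, closed (Defs.orbit G p).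
Proof.
move=> HA Htinv Htorb Hgl HD p y cly.
have [s' hs'] := Htorb p.
have [t ht] := Htorb y.
have key : inner p p + inner y y - 2 * inner (tau p) (tau y) <= 0.
  apply: le0_of_lt => e e0.
  have [z [[s ->] hz]] := closure_approx cly e0.
  have h1 : inner (act s p) y <= inner (tau p) (tau y).
    rewrite -(iso_inner _ _ (HA a0)) -(Htinv s p) -!(Hgl a0); exact: HD.
  move: hz; rewrite sqB act_inner => hz; lra.
have e : tau p = tau y.
  apply/eqP; rewrite -subr_eq0; apply/eqP/sq_eq0/eqP; rewrite eq_le sq_ge0 andbT.
  have hp : inner (tau p) (tau p) = inner p p by rewrite hs' act_inner.
  have hy : inner (tau y) (tau y) = inner y y by rewrite ht act_inner.
  by rewrite sqB hp hy.
exists (gmul (ginv t) s').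
by rewrite actM -hs' e ht act_inv.
Qed.

Lemma orbit_compact (R : realType) m (G : isometric_group_action R m) p :
  closed (Defs.orbit G p) -> compact (Defs.orbit G p).
Proof.
move=> cl; apply: bounded_closed_compact cl.
apply: filterS (nbhs_pinfty_gt (num_real (Num.sqrt (inner p p)))) => M hM z [s ->].
apply: ltW; apply: le_lt_trans (norm_le_sqrt _) _.
by rewrite act_inner.
Qed.

Theorem corollary4p8 (R : realType) (n m : nat)
  (G : isometric_group_action R m) (gamma : 'rV[R]_n -> 'rV[R]_m)
  (A : Type) (Lam : A -> {linear 'rV[R]_m -> 'rV[R]_n})
  (D : set 'rV[R]_m) :
  spectral_decomposition_system G gamma Lam ->
  invariant_set G D ->
  [/\ (gamma @^-1` D)° = gamma @^-1` (D°),
      closure (gamma @^-1` D) = gamma @^-1` (closure D),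
      (closed (gamma @^-1` D) <-> closed D)
    & (convex_rV (gamma @^-1` D) <-> convex_rV D)].
Proof.
move=> [HA [[tau [Htinv [Htorb Hgl]]] [HC HD]]] HinvD.
have [a0 _] := HC 0.
have hsqg : forall X, inner (gamma X) (gamma X) = inner X X.
  by move=> X; have [a Ha] := HC X; rewrite [in RHS]Ha iso_sq.
have gcont : continuous gamma.
  apply: nonexp_cont => X Y; rewrite !sqB !hsqg; have := HD X Y; lra.
have Lcont : forall a, continuous (Lam a).
  move=> a; apply: nonexp_cont => X Y; rewrite -linearB iso_sq //.
have tau_iff : forall E, invariant_set G E -> forall x, E (tau x) <-> E x.
  by move=> E HE x; have [s ->] := Htorb x; apply: inv_iff.
have pre_Lam : forall E, invariant_set G E -> forall a x, E (gamma (Lam a x)) <-> E x.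
  by move=> E HE a x; rewrite Hgl; apply: tau_iff.
have clpre : forall E, invariant_set G E ->
    closure (gamma @^-1` E) = gamma @^-1` (closure E).
  move=> E HE; apply/seteqP; split.
    have cl : closed (gamma @^-1` closure E).
      by apply: preimage_closed => [x _|]; [exact: gcont | exact: closed_closure].
    move=> X /(closureS (B := gamma @^-1` closure E)) h.
    rewrite ((closure_id _).1 cl); apply: h => Y /= EY; exact: subset_closure.
  move=> X /= clX; have [a Ha] := HC X; rewrite Ha.
  have cl : closed (Lam a @^-1` closure (gamma @^-1` E)).
    by apply: preimage_closed => [x _|]; [exact: Lcont | exact: closed_closure].
  have sub : E `<=` Lam a @^-1` closure (gamma @^-1` E).
    by move=> x Ex; apply: subset_closure => /=; apply/(pre_Lam _ HE).
  move: clX => /(closureS sub); rewrite -((closure_id _).1 cl); exact.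
have hii := clpre D HinvD.
split => //.
- have e1 : gamma @^-1` D = ~` (gamma @^-1` (~` D)) by rewrite preimage_setC setCK.
  rewrite e1 interiorC (clpre _ (invC HinvD)).
  by rewrite -[in RHS](setCK D) interiorC preimage_setC.
- split => cl.
    have -> : D = Lam a0 @^-1` (gamma @^-1` D).
      by apply/seteqP; split => x /=; rewrite (pre_Lam _ HinvD).
    by apply: preimage_closed => [x _|//]; exact: Lcont.
  by apply: preimage_closed => [x _|//]; exact: gcont.
- split => cD.
    move=> x y t Dx Dy t0 t1.
    apply/(pre_Lam _ HinvD a0); rewrite linearD !linearZ.
    by apply: cD => //=; apply/(pre_Lam _ HinvD).
  move=> X Y t DX DY t0 t1 /=.
  set Z := t *: X + (1 - t) *: Y.
  have [a Ha] := HC Z.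
  pose M := lin1_mx (Lam a).
  pose adj (w : 'rV[R]_n) := w *m M^T.
  have hadj : forall w u, inner (adj w) u = inner w (Lam a u).
    by move=> w u; rewrite /inner /adj -mul_rV_lin1 trmx_mul mulmxA.
  have hLL : forall w, adj (Lam a w) = w.
    move=> w; apply/eqP; rewrite -subr_eq0; apply/eqP/sq_eq0.
    by rewrite innerBl hadj iso_inner // subrr.
  have hZ : gamma Z = t *: adj X + (1 - t) *: adj Y.
    by rewrite -[LHS]hLL -Ha /adj /Z mulmxDl !scalemxAl.
  have memD : forall W, D (gamma W) -> D (adj W).
    move=> W DW.
    have ocl := orbit_closed a0 HA Htinv Htorb Hgl HD (p := gamma W).
    apply: (conv_sep (orbit_compact ocl)) => //.
    - by exists (gamma W), (gone G); rewrite act1.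
    - by move=> c [s ->]; apply: HinvD.
    - move=> u; have [s hs] := Htorb u.
      exists (act (ginv s) (gamma W)); first by exists (ginv s).
      rewrite hadj; apply: (le_trans (HD _ _)); rewrite Hgl hs.
      by rewrite -(act_inner (ginv s)) act_inv.
  by rewrite hZ; apply: cD; [exact: memD | exact: memD | |].
Qed.
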